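(* Let $R$ be a commutative ring. Then $R$ is $\pi$-regular if and only if $R$ is feckly clean and every prime ideal of $R$ is maximal.
   Context: Rings have identity; $J(R)$ is the Jacobson radical. A ring $R$ is $\pi$-regular if for every $a\in R$ there is $n\in\mathbb{N}$ with $a^n\in a^nRa^n$. An element $u\in R$ is full if $RuR=R$. An element $a\in R$ is feckly clean if there exist $e\in R$ and a full element $u\in R$ with $a=e+u$ and $eR(1-e)\subseteq J(R)$; $R$ is feckly clean if every element is feckly clean. *)

(* Defs.v *)
From HB Require Import structures.
From mathcomp Require Import all_boot all_order all_algebra.
Set Implicit Arguments. Unset Strict Implicit. Unset Printing Implicit Defensive.
Import GRing.Theory.
Local Open Scope ring_scope.

Section FecklyDefs.
Variable R : comPzRingType.

(* An ideal of R, as a predicate (R commutative, so two-sided = one-sided). *)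
Definition is_ideal (I : R -> Prop) : Prop :=
  [/\ I 0, (forall x y, I x -> I y -> I (x + y)) & (forall r x, I x -> I (r * x))].

Definition is_prime_ideal (I : R -> Prop) : Prop :=
  [/\ is_ideal I, ~ I 1 & (forall a b, I (a * b) -> I a \/ I b)].

Definition is_maximal_ideal (M : R -> Prop) : Prop :=
  [/\ is_ideal M, ~ M 1 &
      (forall J : R -> Prop, is_ideal J -> (forall x, M x -> J x) ->
         (forall x, J x <-> M x) \/ J 1)].

Definition jacobson (x : R) : Prop :=
  forall M : R -> Prop, is_maximal_ideal M -> M x.

Definition pi_regular : Prop :=
  forall a : R, exists n : nat, exists b : R,
    a ^+ n.+1 = a ^+ n.+1 * b * a ^+ n.+1.

(* u is full: RuR = R, i.e. 1 is a finite sum of elements r u s. *)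
Definition full (u : R) : Prop :=
  exists (n : nat) (r s : 'I_n -> R), \sum_(i < n) r i * u * s i = 1.

Definition feckly_clean_elt (a : R) : Prop :=
  exists e u : R, [/\ a = e + u, full u & forall r : R, jacobson (e * r * (1 - e))].

Definition feckly_clean : Prop := forall a : R, feckly_clean_elt a.

End FecklyDefs.

(* Main.v *)
Require Import Defs.
From mathcomp Require Import all_boot all_order all_algebra.
From mathcomp Require Import ring.
From Stdlib Require Import ClassicalEpsilon FunctionalExtensionality PropExtensionality Classical.
Import GRing.Theory.
Local Open Scope ring_scope.

Section Zorn.
Variable A : Type.
Definition pincl (P Q : A -> Prop) := forall x, P x -> Q x.
Definition pchain (C : (A -> Prop) -> Prop) :=
  forall P Q, C P -> C Q -> pincl P Q \/ pincl Q P.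
Definition bigU (C : (A -> Prop) -> Prop) : A -> Prop :=
  fun x => exists P, C P /\ P x.

Lemma pincl_antisym P Q : pincl P Q -> pincl Q P -> P = Q.
Proof.
move=> h1 h2; apply: functional_extensionality => x.
apply: propositional_extensionality; split; [apply h1|apply h2].
Qed.

Lemma pincl_refl P : pincl P P. Proof. by move=> x. Qed.
Lemma pincl_trans P Q S : pincl P Q -> pincl Q S -> pincl P S.
Proof. by move=> h1 h2 x /h1 /h2. Qed.

Variable I0 : A -> Prop.

Section Tower.
Variable g : (A -> Prop) -> (A -> Prop).
Hypothesis g_infl : forall I, pincl I (g I).

Definition tclosed (Y : (A -> Prop) -> Prop) :=
  [/\ Y I0, (forall x, Y x -> Y (g x)) &
      (forall C, pchain C -> (exists P, C P) -> (forall P, C P -> Y P) -> Y (bigU C))].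

Definition T x := forall Y, tclosed Y -> Y x.

Lemma T_closed : tclosed T.
Proof.
split.
- by move=> Y [].
- by move=> x Tx Y hY; case: (hY) => _ h _; apply: h; apply: Tx.
- move=> C hC ne hCT Y hY; case: (hY) => _ _ h; apply: h => // P CP.
  exact: hCT.
Qed.

Lemma T_ge0 x : T x -> pincl I0 x.
Proof.
apply; split.
- exact: pincl_refl.
- move=> y hy; apply: pincl_trans hy _; exact: g_infl.
- move=> C _ [P CP] h z hz; exists P; split => //; exact: h.
Qed.

Definition extreme c := forall x, T x -> pincl x c -> ~ pincl c x -> pincl (g x) c.

Lemma T_ind (Y : (A -> Prop) -> Prop) :
  Y I0 -> (forall x, T x -> Y x -> Y (g x)) ->
  (forall C, pchain C -> (exists P, C P) -> (forall P, C P -> T P /\ Y P) -> Y (bigU C)) ->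
  forall x, T x -> Y x.
Proof.
move=> h0 h1 h2 x Tx.
have : T x /\ Y x; last by case.
apply: (Tx (fun z => T z /\ Y z)); case: T_closed => c0 c1 c2; split.
- by split.
- by move=> y [Ty Yy]; split; [apply: c1 | apply: h1].
- move=> C hC ne hCY; split; first by apply: c2 => // P /hCY [].
  exact: h2.
Qed.

Lemma Mc c : T c -> extreme c -> forall x, T x -> pincl x c \/ pincl (g c) x.
Proof.
move=> Tc ec; apply: T_ind.
- left; exact: T_ge0.
- move=> y Ty [yc|gcy].
  + case: (classic (pincl c y)) => cy.
    * have e : y = c by apply: pincl_antisym.
      by subst y; right; apply: pincl_refl.
    * by left; apply: ec.
  + right; apply: pincl_trans gcy _; exact: g_infl.
- move=> C hC ne hCY.
  case: (classic (forall P, C P -> pincl P c)) => h.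
  + by left => z [P [CP Pz]]; apply: h CP _ Pz.
  + right; case: (not_all_ex_not _ _ h) => P hP.
    have [CP nPc] := imply_to_and _ _ hP.
    case: (hCY P CP) => _ [//|gcP].
    move=> z /gcP Pz; by exists P.
Qed.

Lemma all_extreme c : T c -> extreme c.
Proof.
apply: T_ind.
- move=> x Tx xI nI; exfalso; apply: nI; exact: T_ge0.
- move=> c' Tc ec x Tx xg ngx.
  case: (@Mc _ Tc ec _ Tx) => [xc|gcx]; last by exfalso; apply: ngx.
  case: (classic (pincl c' x)) => cx.
  + have e : x = c' by apply: pincl_antisym.
    by subst x; apply: pincl_refl.
  + apply: pincl_trans (ec x Tx xc cx) _; exact: g_infl.
- move=> C hC ne hCE x Tx xU nUx.
  have [P [CP nPx]] : exists P, C P /\ ~ pincl P x.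
    apply: NNPP => hn; apply: nUx => z [P [CP Pz]].
    apply: NNPP => nxz; apply: hn; exists P; split => // hPx.
    by apply: nxz; apply: hPx.
  case: (hCE P CP) => TP eP.
  case: (@Mc _ TP eP _ Tx) => [xP|gPx].
  + move=> z /(eP x Tx xP nPx) Pz; by exists P.
  + exfalso; apply: nPx; apply: pincl_trans gPx; exact: g_infl.
Qed.

Lemma T_chain : pchain T.
Proof.
move=> x y Tx Ty.
case: (@Mc _ Ty (@all_extreme _ Ty) _ Tx) => [h|h]; first by left.
right; apply: pincl_trans h; exact: g_infl.
Qed.

Lemma tower_fix : exists M, T M /\ pincl (g M) M.
Proof.
exists (bigU T).
have TU : T (bigU T).
  case: T_closed => c0 _ c2; apply: c2 => //; first exact: T_chain.
  by exists I0.
split => // z gz; exists (g (bigU T)); split => //.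
by case: T_closed => _ c1 _; apply: c1.
Qed.
End Tower.

Variable F : (A -> Prop) -> Prop.
Hypothesis FI0 : F I0.
Hypothesis Fchain : forall C, pchain C -> (exists P, C P) ->
  (forall P, C P -> F P) -> F (bigU C).

Lemma zorn_max : exists M, F M /\ forall K, F K -> pincl M K -> pincl K M.
Proof.
have hg : forall I, exists J, (F I -> F J) /\ pincl I J /\
   (pincl J I -> F I -> forall K, F K -> pincl I K -> pincl K I).
  move=> I.
  case: (classic (exists K, F K /\ pincl I K /\ ~ pincl K I)) => [[K [FK [IK nKI]]]|nex].
  - by exists K; do 2!split => //.
  - exists I; split => //; split; first exact: pincl_refl.
    move=> _ _ K FK IK; apply: NNPP => nKI; apply: nex; by exists K.
pose g I := proj1_sig (constructive_indefinite_description _ (hg I)).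
have gP I : (F I -> F (g I)) /\ pincl I (g I) /\
   (pincl (g I) I -> F I -> forall K, F K -> pincl I K -> pincl K I).
  exact: (proj2_sig (constructive_indefinite_description _ (hg I))).
have ginfl : forall I, pincl I (g I) by move=> I; case: (gP I) => _ [].
have [M [TM gM]] := @tower_fix g ginfl.
have FM : F M.
  apply: (@T_ind g F _ _ _ M TM) => //.
  - by move=> x _ Fx; case: (gP x) => h _; apply: h.
  - by move=> C hC ne hCF; apply: Fchain => // P /hCF [].
exists M; split => //.
by case: (gP M) => _ [_ h]; apply: h.
Qed.
End Zorn.

Section RingPart.
Variable R : comPzRingType.

Lemma ideal_mulr (I : R -> Prop) : is_ideal I -> forall x r, I x -> I (x * r).
Proof. by case=> _ _ h x r Ix; rewrite mulrC; apply: h. Qed.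

Definition addI (M : R -> Prop) (a : R) : R -> Prop :=
  fun y => exists m r, M m /\ y = m + r * a.

Lemma addI_ideal M a : is_ideal M -> is_ideal (addI M a).
Proof.
case=> M0 MD MM; split.
- by exists 0, 0; split => //; rewrite mul0r addr0.
- move=> x y [m1 [r1 [Mm1 ->]]] [m2 [r2 [Mm2 ->]]].
  exists (m1 + m2), (r1 + r2); split; first exact: MD.
  ring.
- move=> s x [m [r [Mm ->]]]; exists (s * m), (s * r); split; first exact: MM.
  ring.
Qed.

Lemma addI_sup M a : is_ideal M -> forall x, M x -> addI M a x.
Proof. by move=> _ x Mx; exists x, 0; split => //; rewrite mul0r addr0. Qed.

Lemma addI_a M a : is_ideal M -> addI M a a.
Proof. by case=> M0 _ _; exists 0, 1; split => //; rewrite mul1r add0r. Qed.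

Lemma max_prime (M : R -> Prop) : is_maximal_ideal M -> is_prime_ideal M.
Proof.
case=> iM n1 hM; split => // a b Mab.
case: (classic (M a)) => Ma; first by left.
right.
case: (hM (addI M a) (@addI_ideal M a iM) (@addI_sup M a iM)) => [h|[m [r [Mm e]]]].
  by exfalso; apply: Ma; apply/h; apply: addI_a.
have -> : b = b * m + r * (a * b) by rewrite -[b in LHS]mulr1 e; ring.
case: iM => _ MD MM; apply: MD; first by apply: MM.
exact: MM.
Qed.

Lemma prime_pow (P : R -> Prop) (x : R) k : is_prime_ideal P -> P (x ^+ k) -> P x.
Proof.
case=> iP n1 hP; elim: k => [|k IH]; first by rewrite expr0.
by rewrite exprS => /hP [] // /IH.
Qed.

Lemma nil_jac (x : R) k : x ^+ k = 0 -> jacobson x.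
Proof.
move=> xk M /max_prime pM; apply: (@prime_pow M x k) => //.
by rewrite xk; case: pM => [[]].
Qed.


Lemma pi_fc : pi_regular R -> feckly_clean R.
Proof.
move=> hpi a; have [m [b hx]] := hpi a.
set x := a ^+ m.+1 in hx.
set f := x * b.
have ff : f * f = f.
  transitivity ((x * b * x) * b); first by rewrite /f !mulrA.
  by rewrite -hx.
set u := a * f - (1 - f).
set n := a * (1 - f).
have pf k : (1 - f) ^+ k.+1 = 1 - f.
  elim: k => [|k IH]; first by rewrite expr1.
  rewrite exprS IH.
  have -> : (1 - f) * (1 - f) = 1 - f - f + f * f by ring.
  by rewrite ff subrK.
have nm : n ^+ m.+1 = 0.
  rewrite /n exprMn pf -/x.
  have -> : x * (1 - f) = x - x * b * x by rewrite /f; ring.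
  by rewrite -hx subrr.
exists (a - u), u; split.
- by rewrite subrK.
- set c := a ^+ m * b.
  exists 1%N, (fun _ => c * f - (1 - f)), (fun _ => 1).
  rewrite big_ord1 mulr1.
  have -> : (c * f - (1 - f)) * u = (a * c) * f * f - (a + c) * (f - f * f) + (1 - f - f + f * f).
    rewrite /u; ring.
  have acf : a * c * f = f.
    have -> : a * c * f = (x * b * x) * b.
      by rewrite /c /f /x exprS; ring.
    by rewrite -hx.
  rewrite -[a * c * f * f]mulrA !ff acf subrr mulr0 subr0; ring.
- move=> r; apply: (@nil_jac _ m.+1).
  set e := a - u.
  have ee : e * (1 - e) = (1 + a) * (1 + a) * (f - f * f) - (1 + a) * n.
    by rewrite /e /u /n; ring.
  rewrite ff subrr mulr0 add0r in ee.
  have -> : e * r * (1 - e) = n * (- (1 + a) * r).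
    transitivity (r * (e * (1 - e))); first by ring.
    by rewrite ee; ring.
  by rewrite exprMn nm mul0r.
Qed.

Lemma pi_pm : pi_regular R ->
  forall P : R -> Prop, is_prime_ideal P -> is_maximal_ideal P.
Proof.
move=> hpi P pP; have pP' := pP; case: pP' => iP n1 hP; split => // J iJ PJ.
case: (classic (forall x, J x -> P x)) => hJ.
  by left => x; split; [apply: hJ | apply: PJ].
right; case: (not_all_ex_not _ _ hJ) => a hna; have [Ja nPa] := imply_to_and _ _ hna.
have [m [b hx]] := hpi a.
set x := a ^+ m.+1 in hx.
have nPx : ~ P x by move=> /(@prime_pow P a m.+1 pP).
have P0 : P (x * (1 - b * x)).
  have -> : x * (1 - b * x) = x - x * b * x by ring.
  by rewrite -hx subrr; case: iP.
case: (hP _ _ P0) => // Pbx.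
have Jx : J x by rewrite /x exprS; exact: (@ideal_mulr J iJ a _ Ja).
have -> : (1 : R) = (1 - b * x) + b * x by rewrite subrK.
case: iJ => _ JD JM; apply: JD; first exact: PJ.
exact: JM.
Qed.

Lemma pm_pi : (forall P : R -> Prop, is_prime_ideal P -> is_maximal_ideal P) ->
  pi_regular R.
Proof.
move=> hpm a.
pose S (y : R) := exists k r, y = a ^+ k * (1 - a * r).
have S1 : S 1 by exists 0%N, 0; rewrite expr0 mulr0 subr0 mul1r.
have Sa : S a by exists 1%N, 0; rewrite expr1 mulr0 subr0 mulr1.
have SM y z : S y -> S z -> S (y * z).
  move=> [k [r ->]] [j [s ->]]; exists (k + j)%N, (r + s - a * r * s).
  rewrite exprD; set p := a ^+ k; set q := a ^+ j; ring.
have [k [r e0]] : exists k r, a ^+ k * (1 - a * r) = 0.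
  apply: NNPP => hn.
  pose F (I : R -> Prop) := is_ideal I /\ forall y, S y -> ~ I y.
  have FI0 : F (fun y => y = 0).
    split; first by split => // [x y -> ->|r' x ->]; rewrite ?addr0 ?mulr0.
    by move=> y [k [r ->]] h; apply: hn; exists k, r.
  have Fch : forall C : (R -> Prop) -> Prop, @pchain R C -> (exists P, C P) ->
      (forall P, C P -> F P) -> F (@bigU R C).
    move=> C hC [P0 CP0] hCF; split; first split.
    - by exists P0; split => //; case: (hCF _ CP0) => [[]].
    - move=> x y [P [CP Px]] [Q [CQ Qy]].
      case: (hC _ _ CP CQ) => PQ.
      + exists Q; split => //; case: (hCF _ CQ) => [[_ h _] _]; apply: h => //.
        exact: PQ.
      + exists P; split => //; case: (hCF _ CP) => [[_ h _] _]; apply: h => //.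
        exact: PQ.
    - move=> r' x [P [CP Px]]; exists P; split => //.
      by case: (hCF _ CP) => [[_ _ h] _]; apply: h.
    - by move=> y Sy [P [CP Py]]; case: (hCF _ CP) => _ h; apply: (h y).
  have [M [[iM dM] mM]] := @zorn_max R (fun y => y = 0) F FI0 Fch.
  have pM : is_prime_ideal M.
    split => // [/(dM _ S1) //|x y Mxy].
    have key z : ~ M z -> exists s, S s /\ addI M z s.
      move=> nMz; apply: NNPP => hs; apply: nMz.
      have Fz : F (addI M z).
        split; first exact: addI_ideal.
        by move=> s Ss As; apply: hs; exists s.
      by apply: (mM _ Fz (@addI_sup M z iM)); apply: addI_a.
    apply: NNPP => /not_or_and [nMx nMy].
    have [s1 [Ss1 [m1 [r1 [Mm1 e1]]]]] := key x nMx.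
    have [s2 [Ss2 [m2 [r2 [Mm2 e2]]]]] := key y nMy.
    apply: (dM _ (SM _ _ Ss1 Ss2)).
    have -> : s1 * s2 = (m2 + r2 * y) * m1 + (r1 * x) * m2 + (r1 * r2) * (x * y).
      by rewrite e1 e2; ring.
    case: iM => _ MD MMl.
    by apply: (MD); [apply: (MD)|]; apply: MMl.
  case: (hpm M pM) => _ _ hmax.
  case: (hmax (addI M a) (@addI_ideal M a iM) (@addI_sup M a iM)) => [h|[m [r' [Mm e]]]].
    by apply: (dM a Sa); apply/h; apply: addI_a.
  apply: (dM m) => //; exists 0%N, r'.
  by rewrite expr0 mul1r e [a * r']mulrC addrK.
have ek : a ^+ k = a ^+ k * (a * r).
  by apply/eqP; rewrite -subr_eq0 -{1}[a ^+ k]mulr1 -mulrBr e0.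
have ej j : a ^+ k = a ^+ k * (a * r) ^+ j.
  elim: j => [|j IH]; first by rewrite expr0 mulr1.
  by rewrite exprSr mulrA -IH.
exists k, (r ^+ k.+1).
rewrite [in LHS]exprS [in LHS](ej k.+1) exprMn !exprS.
set t := a ^+ k; set q := r ^+ k.
ring.
Qed.
End RingPart.

Theorem corollary5p8 (R : comPzRingType) :
  pi_regular R <->
  (feckly_clean R /\
   forall P : R -> Prop, is_prime_ideal P -> is_maximal_ideal P).
Proof.
split.
- by move=> h; split; [apply: pi_fc | apply: pi_pm].
- by case=> _; apply: pm_pi.
Qed.
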